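(* For every integer $k\ge 0$, the set ${\bf Forb}(\Gamma_{\le k})$ is non-empty.
   Context: For a finite graph $G$ and indeterminates $X_G=\{x_u : u\in V(G)\}$, the generalized Laplacian matrix $L(G,X_G)$ is the $V(G)\times V(G)$ matrix over $\mathbb{Z}[X_G]$ with $(u,u)$-entry $x_u$ and $(u,v)$-entry $-m_{uv}$ for $u\ne v$, $m_{uv}$ being the number of edges between $u$ and $v$. The $i$-th critical ideal $I_i(G,X_G)$ is the ideal of $\mathbb{Z}[X_G]$ generated by all $i\times i$ minors of $L(G,X_G)$ (with $I_i=\langle1\rangle$ for $i<1$, $I_i=\langle 0\rangle$ for $i>|V(G)|$). The algebraic co-rank $\gamma(G)$ is the number of critical ideals of $G$ equal to $\langle 1\rangle$. $\Gamma_{\le k}$ is the set of simple connected graphs with $\gamma\le k$; ${\bf Forb}(\Gamma_{\le k})$ is the set of minimal (under induced subgraphs) simple connected graphs $G$ with $\gamma(G)\ge k+1$, equivalently the simple connected graphs $G$ with $\gamma(G)=k+1$ and $\gamma(G\setminus v)<\gamma(G)$ for all vertices $v$. *)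

(* Defs.v *)
From HB Require Import structures.
From mathcomp Require Import all_boot all_order all_algebra.
From mathcomp Require Import mpoly.
From Stdlib Require Import ClassicalEpsilon.

Set Implicit Arguments.
Unset Strict Implicit.
Unset Printing Implicit Defensive.

Import GRing.Theory.
Local Open Scope ring_scope.

Definition simple_graph (n : nat) (e : rel 'I_n) : Prop :=
  (forall u v, e u v = e v u) /\ (forall u, ~~ e u u).

Definition connected_graph (n : nat) (e : rel 'I_n) : Prop :=
  forall u v, connect e u v.

Definition gen_laplacian (n : nat) (e : rel 'I_n) : 'M[{mpoly int[n]}]_n :=
  \matrix_(u, v) (if u == v then 'X_u else if e u v then -1 else 0).

Definition incr_sel (i n : nat) (f : {ffun 'I_i -> 'I_n}) : Prop :=
  forall a b : 'I_i, (a < b)%N -> (f a < f b)%N.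

Definition minor (n i : nat) (M : 'M[{mpoly int[n]}]_n)
  (f g : {ffun 'I_i -> 'I_n}) : {mpoly int[n]} :=
  \det (\matrix_(a, b) M (f a) (g b)).

(* The i-th critical ideal (ideal generated by all i x i minors) equals <1>:
   1 is a Z[X_G]-linear combination of i x i minors. *)
Definition critical_ideal_trivial (n : nat) (e : rel 'I_n) (i : nat) : Prop :=
  exists s : seq ({mpoly int[n]} * {ffun 'I_i -> 'I_n} * {ffun 'I_i -> 'I_n}),
    (forall t, t \in s -> incr_sel t.1.2 /\ incr_sel t.2) /\
    \sum_(t <- s) t.1.1 * minor (gen_laplacian e) t.1.2 t.2 = 1.

Definition critical_ideal_trivialb (n : nat) (e : rel 'I_n) (i : nat) : bool :=
  if excluded_middle_informative (critical_ideal_trivial e i) then true else false.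

Definition gamma (n : nat) (e : rel 'I_n) : nat :=
  (\sum_(1 <= i < n.+1) critical_ideal_trivialb e i)%N.

Definition delete_vertex (n : nat) (e : rel 'I_n.+1) (v : 'I_n.+1) : rel 'I_n :=
  fun a b => e (lift v a) (lift v b).

(* G is in Forb(Gamma_{<= k}) (graphs have at least one vertex) *)
Definition in_Forb (k n : nat) (e : rel 'I_n.+1) : Prop :=
  simple_graph e /\ connected_graph e /\ gamma e = k.+1 /\
  forall v, (gamma (delete_vertex e v) < gamma e)%N.

(* Main.v *)
Require Import Defs.
From HB Require Import structures.
From mathcomp Require Import all_boot all_order all_algebra.
From mathcomp Require Import mpoly.
Import GRing.Theory.
Local Open Scope ring_scope.

Lemma incr_inj i n (g : {ffun 'I_i -> 'I_n}) : incr_sel g -> injective g.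
Proof.
move=> Hg a b Hab; apply/eqP; case: (ltngtP a b) => // H.
- by have := Hg _ _ H; rewrite Hab ltnn.
- by have := Hg _ _ H; rewrite Hab ltnn.
- by apply/eqP/val_inj.
Qed.

Lemma no_top (m : nat) (e : rel 'I_m) : (0 < m)%N -> ~ critical_ideal_trivial e m.
Proof.
move=> m0 [s [Hs Hsum]].
pose d : 'I_m -> int := fun u => \sum_(w | w != u) (if e u w then 1 else 0).
have H0 : forall t, t \in s -> meval d (minor (gen_laplacian e) t.1.2 t.2) = 0.
  move=> [[c f] g] /Hs /= [_ /incr_inj gi].
  rewrite /minor -det_map_mx.
  set A := map_mx _ _.
  have rs : forall a, \sum_b A a b = 0.
    move=> a.
    have -> : \sum_b A a b = \sum_b meval d (gen_laplacian e (f a) (g b)).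
      by apply: eq_bigr => b _; rewrite /A !mxE.
    rewrite -(reindex_inj gi (P:=xpredT) (F := fun c => meval d (gen_laplacian e (f a) c))) /=.
    rewrite (bigD1 (f a)) //= /gen_laplacian mxE eqxx mevalXU /d -big_split /=.
    apply: big1 => w Hw; rewrite mxE eq_sym (negbTE Hw).
    by case: (e (f a) w); rewrite ?mevalN ?meval1 ?meval0 ?subrr ?addr0.
  apply/eqP; rewrite -det_tr.
  rewrite -(intr_eq0 rat) -det_map_mx /=.
  apply/det0P; exists (const_mx 1).
    apply/eqP => /matrixP /(_ 0 (Ordinal m0)); rewrite !mxE => /eqP.
    by rewrite oner_eq0.
  apply/matrixP => i j; rewrite !mxE.
  rewrite (eq_bigr (fun b => (A j b)%:~R)); last by move=> b _; rewrite !mxE mul1r.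
  by rewrite -rmorph_sum /= rs.
have H1 := congr1 (meval d) Hsum.
rewrite meval1 rmorph_sum /= big_seq big1 in H1; last first.
  by move=> t Ht; rewrite mevalM H0 // mulr0.
by move/eqP: H1; rewrite eq_sym oner_eq0.
Qed.

From mathcomp Require Import zify.
From Stdlib Require Import ClassicalEpsilon.

Definition path_e (n : nat) : rel 'I_n.+1 :=
  fun u v => ((u : nat).+1 == v) || ((v : nat).+1 == u).

Lemma path_trivial n i : (i <= n)%N -> critical_ideal_trivial (path_e n) i.
Proof.
move=> Hi.
pose f : {ffun 'I_i -> 'I_n.+1} := [ffun a : 'I_i => inord a].
pose g : {ffun 'I_i -> 'I_n.+1} := [ffun a : 'I_i => inord (a : nat).+1].
have fE : forall a : 'I_i, (f a : nat) = a.
  by move=> a; rewrite ffunE inordK //; have := ltn_ord a; lia.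
have gE : forall a : 'I_i, (g a : nat) = (a : nat).+1.
  by move=> a; rewrite ffunE inordK //; have := ltn_ord a; lia.
exists [:: ((-1) ^+ i, f, g)]; split.
  move=> t; rewrite inE => /eqP -> /=; split => a b ab.
    by rewrite fE fE.
  by rewrite gE gE.
rewrite big_cons big_nil addr0 /= /minor det_trig; last first.
  apply/is_trig_mxP => a b ab; rewrite !mxE.
  have -> : (f a == g b) = false by apply/negbTE; apply/eqP => /(congr1 val); rewrite /= fE gE; lia.
  rewrite /path_e fE gE.
  have -> : ((a : nat).+1 == (b : nat).+1) = false by apply/eqP; lia.
  by have -> : ((b : nat).+2 == a) = false by apply/eqP; lia.
rewrite (eq_bigr (fun _ => -1)); last first.
  move=> a _; rewrite !mxE.
  have -> : (f a == g a) = false by apply/negbTE; apply/eqP => /(congr1 val); rewrite /= fE gE; lia.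
  by rewrite /path_e fE gE eqxx.
by rewrite prodr_const card_ord -exprMn mulrNN mulr1 expr1n.
Qed.

Lemma bT (m : nat) (e : rel 'I_m) i : critical_ideal_trivial e i -> critical_ideal_trivialb e i = true.
Proof. by rewrite /critical_ideal_trivialb; case: excluded_middle_informative. Qed.

Lemma bF (m : nat) (e : rel 'I_m) : (0 < m)%N -> critical_ideal_trivialb e m = false.
Proof.
move=> m0; rewrite /critical_ideal_trivialb; case: excluded_middle_informative => // H.
by case: (@no_top m e m0 H).
Qed.

Lemma gamma_le (m : nat) (e : rel 'I_m.+1) : (gamma e <= m)%N.
Proof.
rewrite /gamma big_nat_recr //= bF // addn0.
apply: (@leq_trans (\sum_(1 <= i < m.+1) 1)%N).
  by apply: leq_sum => i _; apply: leq_b1.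
by rewrite sum_nat_const_nat; lia.
Qed.

Lemma gamma_path k : gamma (path_e k.+1) = k.+1.
Proof.
rewrite /gamma big_nat_recr //= bF // addn0.
rewrite (eq_big_nat _ _ (F2 := fun => 1%N)); first by rewrite sum_nat_const_nat; lia.
by move=> i /andP [_ Hi]; rewrite bT //; apply: path_trivial; lia.
Qed.

Theorem corollary5p4 :
  forall k : nat, exists (n : nat) (e : rel 'I_n.+1), in_Forb k e.
Proof.
move=> k; exists k.+1, (path_e k.+1).
have sym : ssrbool.symmetric (path_e k.+1) by move=> u v; rewrite /path_e orbC.
split; [split|split; [|split]].
- by move=> u v; apply: sym.
- by move=> u; rewrite /path_e; apply/norP; split; apply/eqP; lia.
- have H : forall j, (j < k.+2)%N -> connect (path_e k.+1) ord0 (inord j).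
    elim=> [_|j IH Hj].
      by rewrite (_ : inord 0 = ord0) //; apply/val_inj; rewrite /= inordK.
    apply: connect_trans (IH (ltnW Hj)) (connect1 _).
    by rewrite /path_e !inordK ?eqxx //; lia.
  move=> u v; apply: (connect_trans (y := ord0)).
    by rewrite (sym_connect_sym sym) -(inord_val u); apply: H.
  by rewrite -(inord_val v); apply: H.
- exact: gamma_path.
- by move=> v; rewrite gamma_path; exact: (leq_ltn_trans (@gamma_le k (delete_vertex (path_e k.+1) v))).
Qed.
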